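(* Let $P$ be a poset. Then $P$ is $3$-representable if and only if $P\models\psi_n$ for all $n\in\omega$.
   Context: A poset $P$ is $3$-representable if there is a set $X$ and an order embedding $h:P\to\wp(X)$ ($\wp(X)$ ordered by inclusion) such that whenever $S\subseteq P$ with $|S|<3$ and $\bigwedge S$ exists in $P$ then $h(\bigwedge S)=\bigcap h[S]$ (with $\bigcap\emptyset=X$), and whenever $T\subseteq P$ with $|T|<3$ and $\bigvee T$ exists in $P$ then $h(\bigvee T)=\bigcup h[T]$. The sentences $\psi_n$ are in the signature with one binary relation $\leq$: let $J(x,y,z)$ be $x\leq z\wedge y\leq z\wedge\forall w((x\leq w\wedge y\leq w)\to z\leq w)$, $M(x,y,z)$ the dual formula (z is the meet of $x,y$), $C_k(x_1,\ldots,x_k,y)=\bigvee_{i=1}^k(y=x_i)$ (false for $k=0$), $D_k=\neg C_k$, $\vec{x}_m=(x_1,\ldots,x_m)$. Define $\phi_{m0}(\vec{x}_m,y)=D_m(\vec{x}_m,y)$ and $\phi_{m(n+1)}(\vec{x}_m,y)=\forall a\forall b\forall c\Big(\big(\exists d(C_m(\vec{x}_m,d)\wedge d\leq a)\to\phi_{(m+1)n}(\vec{x}_m,a,y)\big)\wedge\big((C_m(\vec{x}_m,a)\wedge C_m(\vec{x}_m,b)\wedge M(a,b,c))\to\phi_{(m+1)n}(\vec{x}_m,c,y)\big)\wedge\big((C_m(\vec{x}_m,c)\wedge J(a,b,c))\to(\phi_{(m+1)n}(\vec{x}_m,a,y)\vee\phi_{(m+1)n}(\vec{x}_m,b,y))\big)\Big)$,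 and $\psi_n=\forall x\forall y(\neg(x\leq y)\to\phi_{1n}(x,y))$. *)

(* Defs.v *)
From Stdlib Require Import List.
Import ListNotations.

Section PosetDefs.
Variable T : Type.
Variable le : T -> T -> Prop.

Definition is_poset : Prop :=
  (forall x, le x x) /\
  (forall x y, le x y -> le y x -> x = y) /\
  (forall x y z, le x y -> le y z -> le x z).

Definition is_inf (S : T -> Prop) (m : T) : Prop :=
  (forall s, S s -> le m s) /\ (forall w, (forall s, S s -> le w s) -> le w m).

Definition is_sup (S : T -> Prop) (j : T) : Prop :=
  (forall s, S s -> le s j) /\ (forall w, (forall s, S s -> le s w) -> le j w).

(* 3-representability: an order embedding h : P -> powerset(X) preserving
   all existing meets and joins of subsets S with |S| < 3
   (finite subsets of size < 3 are exactly those enumerated by a list of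
   length < 3); subsets of X are predicates, with extensional equality. *)
Definition three_representable : Prop :=
  exists (X : Type) (h : T -> X -> Prop),
    (forall p q, le p q <-> (forall x, h p x -> h q x)) /\
    (forall (l : list T) (m : T), length l < 3 ->
        is_inf (fun s => In s l) m ->
        forall x, h m x <-> (forall s, In s l -> h s x)) /\
    (forall (l : list T) (j : T), length l < 3 ->
        is_sup (fun s => In s l) j ->
        forall x, h j x <-> (exists s, In s l /\ h s x)).

Definition Jf (x y z : T) : Prop :=
  le x z /\ le y z /\ forall w, (le x w /\ le y w) -> le z w.
Definition Mf (x y z : T) : Prop :=
  le z x /\ le z y /\ forall w, (le w x /\ le w y) -> le w z.

(* Semantics of phi_{m n}(xs, y), where xs is the tuple (x_1,...,x_m),
   m = length xs; C_m(xs, d) is (In d xs). *)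
Fixpoint phi (n : nat) (xs : list T) (y : T) : Prop :=
  match n with
  | O => ~ In y xs
  | S n' =>
      forall a b c : T,
        ((exists d, In d xs /\ le d a) -> phi n' (xs ++ [a]) y) /\
        ((In a xs /\ In b xs /\ Mf a b c) -> phi n' (xs ++ [c]) y) /\
        ((In c xs /\ Jf a b c) -> (phi n' (xs ++ [a]) y \/ phi n' (xs ++ [b]) y))
  end.

Definition psi (n : nat) : Prop :=
  forall x y : T, ~ le x y -> phi n [x] y.

End PosetDefs.

(* Main.v *)
Require Import Defs.
From Stdlib Require Import List Lia Classical.
From mathcomp Require classical_sets.
Import ListNotations.

Section Proof.
Variable T : Type.
Variable le : T -> T -> Prop.
Hypothesis HP : is_poset T le.

Lemma refl_le x : le x x. Proof. apply HP. Qed.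

Lemma phi_mono_list y n : forall l l', (forall s, In s l' -> In s l) ->
  phi T le n l y -> phi T le n l' y.
Proof.
  induction n as [|n IH]; simpl; intros l l' Hs H.
  - intro Hy; apply H, Hs, Hy.
  - intros a b c; destruct (H a b c) as [h1 [h2 h3]]; split; [|split].
    + intros [d [Hd Hda]]. eapply IH; [|apply h1; exists d; split; eauto].
      intros s Hs'; apply in_app_or in Hs'; apply in_or_app; destruct Hs'; auto.
    + intros [Ha [Hb Hm]]. eapply IH; [|apply h2; repeat split; eauto; apply Hm].
      intros s Hs'; apply in_app_or in Hs'; apply in_or_app; destruct Hs'; auto.
    + intros [Hc Hj]. destruct (h3 (conj (Hs _ Hc) Hj)) as [Q|Q]; [left|right];
      (eapply IH; [|apply Q]);
      intros s Hs'; apply in_app_or in Hs'; apply in_or_app; destruct Hs'; auto.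
Qed.

Lemma phi_succ y n : forall l, phi T le (S n) l y -> phi T le n l y.
Proof.
  induction n as [|n IH]; intros l H.
  - simpl. intro Hy. destruct (H y y y) as [h1 _].
    apply (h1 (ex_intro _ y (conj Hy (refl_le y)))).
    apply in_or_app; right; simpl; auto.
  - intros a b c; destruct (H a b c) as [h1 [h2 h3]]; split; [|split].
    + intro q; exact (IH _ (h1 q)).
    + intro q; exact (IH _ (h2 q)).
    + intro q; destruct (h3 q) as [Q|Q]; [left; exact (IH _ Q)|right; exact (IH _ Q)].
Qed.

Lemma phi_le y n m l : n <= m -> phi T le m l y -> phi T le n l y.
Proof.
  induction 1; auto. intro H'; apply IHle, phi_succ, H'.
Qed.

Definition G y l := forall n, phi T le n l y.

Lemma G_mono y l l' : (forall s, In s l' -> In s l) -> G y l -> G y l'.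
Proof. intros Hs H n; eapply phi_mono_list; eauto. Qed.

Lemma G0 y l : G y l -> ~ In y l.
Proof. intro H; apply (H 0). Qed.

Lemma G1 y l d a : G y l -> In d l -> le d a -> G y (l ++ [a]).
Proof.
  intros H Hd Hda n. destruct (H (S n) a a a) as [h1 _]. apply h1; eauto.
Qed.

Lemma G2 y l a b c : G y l -> In a l -> In b l -> Mf T le a b c -> G y (l ++ [c]).
Proof.
  intros H Ha Hb Hm n. destruct (H (S n) a b c) as [_ [h2 _]]. apply h2; auto.
Qed.

Lemma G3 y l a b c : G y l -> In c l -> Jf T le a b c -> G y (l ++ [a]) \/ G y (l ++ [b]).
Proof.
  intros H Hc Hj. apply NNPP; intro Hn.
  apply not_or_and in Hn; destruct Hn as [Na Nb].
  apply not_all_ex_not in Na; destruct Na as [n1 Na].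
  apply not_all_ex_not in Nb; destruct Nb as [n2 Nb].
  destruct (H (S (max n1 n2)) a b c) as [_ [_ h3]].
  destruct (h3 (conj Hc Hj)) as [Q|Q].
  - apply Na; eapply phi_le; [|exact Q]; lia.
  - apply Nb; eapply phi_le; [|exact Q]; lia.
Qed.

Definition Pset x y (A : T -> Prop) := forall l, (forall s, In s l -> A s) -> G y (x :: l).

Lemma split_list (A : T -> Prop) a l : (forall s, In s l -> A s \/ s = a) ->
  exists l0, (forall s, In s l0 -> A s) /\ (forall s, In s l -> In s l0 \/ s = a).
Proof.
  induction l as [|z l IH]; intros H.
  - exists []; split; simpl; tauto.
  - destruct IH as [l0 [H1 H2]]. { intros s Hs; apply H; simpl; auto. }
    destruct (H z (or_introl eq_refl)) as [Hz|Hz].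
    + exists (z :: l0); split.
      * intros s [<-|Hs]; auto.
      * intros s [<-|Hs]; simpl; auto. destruct (H2 s Hs); auto.
    + exists l0; split; auto. intros s [<-|Hs]; auto.
Qed.

Lemma chain_list (F : (T -> Prop) -> Prop) l :
  classical_sets.total_on F classical_sets.subset ->
  (forall s, In s l -> exists2 X, F X & X s) ->
  l = [] \/ exists X, F X /\ forall s, In s l -> X s.
Proof.
  intros Htot. induction l as [|z l IH]; intros H; auto. right.
  destruct (H z (or_introl eq_refl)) as [Xz FXz Xzz].
  destruct IH as [E|[X [FX HX]]]. { intros s Hs; apply H; simpl; auto. }
  - subst. exists Xz; split; auto. intros s [<-|[]]; auto.
  - destruct (Htot X Xz FX FXz) as [S|S].
    + exists Xz; split; auto. intros s [<-|Hs]; [exact Xzz|apply S; auto].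
    + exists X; split; auto. intros s [<-|Hs]; [apply S; exact Xzz|auto].
Qed.

Definition upc (F : T -> Prop) := forall a b, F a -> le a b -> F b.
Definition mc (F : T -> Prop) := forall a b c, F a -> F b -> Mf T le a b c -> F c.
Definition pr (F : T -> Prop) := forall a b c, F c -> Jf T le a b c -> F a \/ F b.

Lemma separate x y : (forall n, phi T le n [x] y) ->
  exists F : T -> Prop, upc F /\ mc F /\ pr F /\ F x /\ ~ F y.
Proof.
  intros Hxy.
  destruct (@classical_sets.Zorn_bigcup T (Pset x y)) as [A [PA Amax]].
  { intros F FP Ftot l Hl.
    destruct (chain_list F l Ftot Hl) as [E|[X [FX HX]]].
    - subst; exact Hxy.
    - apply (FP X FX); auto. }
  assert (ext : forall a, (forall l, (forall s, In s l -> A s) -> G y (x :: l ++ [a])) -> A a).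
  { intros a Ha.
    assert (PB : Pset x y (fun s => A s \/ s = a)).
    { intros l Hl. destruct (split_list A a l Hl) as [l0 [H1 H2]].
      eapply G_mono; [|apply (Ha l0 H1)].
      intros s [<-|Hs]; simpl; auto. right; apply in_or_app.
      destruct (H2 s Hs); [left; auto|right; subst; simpl; auto]. }
    apply NNPP; intro NA. apply (Amax (fun s => A s \/ s = a)); [|exact PB].
    split; [intros t Ht; left; exact Ht|intro S; apply NA; apply (S a); right; reflexivity]. }
  assert (Ax : A x).
  { apply ext. intros l Hl. eapply G_mono; [|apply (PA l Hl)].
    intros s [<-|Hs]; simpl; auto. apply in_app_or in Hs; destruct Hs as [Hs|[<-|[]]]; auto. }
  exists A; split; [|split; [|split; [|split]]].
  - intros d a Hd Hda. apply ext. intros l Hl.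
    assert (Q : G y ((x :: l ++ [d]) ++ [a])).
    { apply (G1 y _ d); [apply PA|simpl; right; apply in_or_app; simpl; auto|exact Hda].
      intros s Hs; apply in_app_or in Hs; destruct Hs as [Hs|[<-|[]]]; auto. }
    eapply G_mono; [|exact Q]. intros s Hs. simpl in Hs |- *.
    destruct Hs as [Hs|Hs]; auto. right. apply in_app_or in Hs.
    rewrite <- app_assoc. apply in_or_app; destruct Hs; [left; auto|right; simpl; auto].
  - intros a b c Ha Hb Hm. apply ext. intros l Hl.
    assert (Q : G y ((x :: l ++ [a; b]) ++ [c])).
    { apply (G2 y _ a b); [apply PA| | |exact Hm].
      - intros s Hs; apply in_app_or in Hs; destruct Hs as [Hs|[<-|[<-|[]]]]; auto.
      - simpl; right; apply in_or_app; simpl; auto.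
      - simpl; right; apply in_or_app; simpl; auto. }
    eapply G_mono; [|exact Q]. intros s Hs. simpl in Hs |- *.
    destruct Hs as [Hs|Hs]; auto. right. apply in_app_or in Hs.
    rewrite <- app_assoc. apply in_or_app; destruct Hs; [left; auto|right; simpl; auto].
  - intros a b c Hc Hj. apply NNPP; intro N. apply not_or_and in N; destruct N as [Na Nb].
    assert (Ea : exists l, (forall s, In s l -> A s) /\ ~ G y (x :: l ++ [a])).
    { apply NNPP; intro E. apply Na, ext. intros l Hl. apply NNPP; intro E2. apply E; eauto. }
    assert (Eb : exists l, (forall s, In s l -> A s) /\ ~ G y (x :: l ++ [b])).
    { apply NNPP; intro E. apply Nb, ext. intros l Hl. apply NNPP; intro E2. apply E; eauto. }
    destruct Ea as [l1 [H1 N1]]; destruct Eb as [l2 [H2 N2]].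
    assert (Q : G y (x :: l1 ++ l2 ++ [c])).
    { apply PA. intros s Hs; apply in_app_or in Hs; destruct Hs as [Hs|Hs]; auto.
      apply in_app_or in Hs; destruct Hs as [Hs|[<-|[]]]; auto. }
    destruct (G3 y _ a b c Q) as [Q'|Q'].
    + simpl; right; apply in_or_app; right; apply in_or_app; simpl; auto.
    + exact Hj.
    + apply N1; eapply G_mono; [|exact Q']. intros s Hs. simpl in Hs |- *.
      destruct Hs as [Hs|Hs]; auto. right. apply in_app_or in Hs. apply in_or_app.
      destruct Hs as [Hs|Hs]; [left; apply in_or_app; auto|right; auto].
    + apply N2; eapply G_mono; [|exact Q']. intros s Hs. simpl in Hs |- *.
      destruct Hs as [Hs|Hs]; auto. right. apply in_app_or in Hs. apply in_or_app.
      destruct Hs as [Hs|Hs]; [left; apply in_or_app; right; apply in_or_app; auto|right; auto].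
  - exact Ax.
  - intro Ay. apply (G0 y [x; y]); [|simpl; auto].
    apply (PA [y]). intros s [<-|[]]; auto.
Qed.
End Proof.

Lemma inf2 T le a b m : is_inf T le (fun s => In s [a; b]) m <-> Mf T le a b m.
Proof.
  unfold is_inf, Mf; split.
  - intros [H1 H2]; repeat split; [apply H1; simpl; auto|apply H1; simpl; auto|].
    intros w [Ha Hb]; apply H2; intros s [<-|[<-|[]]]; auto.
  - intros [Ha [Hb H]]; split; [intros s [<-|[<-|[]]]; auto|].
    intros w Hw; apply H; split; apply Hw; simpl; auto.
Qed.

Lemma sup2 T le a b m : is_sup T le (fun s => In s [a; b]) m <-> Jf T le a b m.
Proof.
  unfold is_sup, Jf; split.
  - intros [H1 H2]; repeat split; [apply H1; simpl; auto|apply H1; simpl; auto|].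
    intros w [Ha Hb]; apply H2; intros s [<-|[<-|[]]]; auto.
  - intros [Ha [Hb H]]; split; [intros s [<-|[<-|[]]]; auto|].
    intros w Hw; apply H; split; apply Hw; simpl; auto.
Qed.

Lemma fwd T le (X : Type) (h : T -> X -> Prop)
  (H1 : forall p q, le p q <-> (forall x, h p x -> h q x))
  (H2 : forall (l : list T) (m : T), length l < 3 ->
        is_inf T le (fun s => In s l) m -> forall x, h m x <-> (forall s, In s l -> h s x))
  (H3 : forall (l : list T) (j : T), length l < 3 ->
        is_sup T le (fun s => In s l) j -> forall x, h j x <-> (exists s, In s l /\ h s x))
  pt y : ~ h y pt -> forall n l, (forall s, In s l -> h s pt) -> phi T le n l y.
Proof.
  intros Ny n; induction n as [|n IH]; intros l Hl.
  - simpl; intro Hy; apply Ny, Hl, Hy.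
  - intros a b c; split; [|split].
    + intros [d [Hd Hda]]. apply IH. intros s Hs; apply in_app_or in Hs.
      destruct Hs as [Hs|[<-|[]]]; auto. apply (proj1 (H1 d _) Hda); auto.
    + intros [Ha [Hb Hm]]. apply IH. intros s Hs; apply in_app_or in Hs.
      destruct Hs as [Hs|[<-|[]]]; auto.
      apply (H2 [a; b] _); [simpl; lia|apply inf2; exact Hm|].
      intros t [<-|[<-|[]]]; auto.
    + intros [Hc Hj]. pose proof (proj1 (H3 [a; b] c ltac:(simpl; lia) (proj2 (sup2 T le a b c) Hj) pt) (Hl c Hc)) as [s [Hs Hsp]].
      destruct Hs as [<-|[<-|[]]]; [left|right]; apply IH;
      intros t Ht; apply in_app_or in Ht; destruct Ht as [Ht|[<-|[]]]; auto.
Qed.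

Theorem theorem4p3 (T : Type) (le : T -> T -> Prop) (HP : is_poset T le) :
  three_representable T le <-> (forall n : nat, psi T le n).
Proof.
  split.
  - intros [X [h [H1 [H2 H3]]]] n x y Nxy.
    assert (E : exists pt, h x pt /\ ~ h y pt).
    { apply NNPP; intro E. apply Nxy, H1. intros pt Hx. apply NNPP; intro Hy.
      apply E; eauto. }
    destruct E as [pt [Hx Hy]].
    apply (fwd T le X h H1 H2 H3 pt y Hy n [x]). intros s [<-|[]]; auto.
  - intros Hpsi.
    pose proof HP as [Hr [Ha Ht]].
    pose (X := {F : T -> Prop | upc T le F /\ mc T le F /\ pr T le F /\ (exists p, F p) /\ (exists q, ~ F q)}).
    exists X, (fun p (F : X) => proj1_sig F p).
    split; [|split].
    + intros p q; split.
      * intros Hpq [F HF] Fp; simpl in *; destruct HF as [Fu _]. eapply Fu; eauto.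
      * intros H. apply NNPP; intro Npq.
        destruct (separate T le HP p q (fun n => Hpsi n p q Npq)) as [F [Fu [Fm [Fp [Fx Fy]]]]].
        apply Fy. exact (H (exist _ F (conj Fu (conj Fm (conj Fp (conj (ex_intro _ p Fx) (ex_intro _ q Fy)))))) Fx).
    + intros l m Hlen Hinf [F HF]; simpl; destruct HF as [Fu [Fm [Fp [[p0 Fp0] [q0 Fq0]]]]].
      destruct l as [|a [|b [|c l]]]; simpl in Hlen; try lia.
      * split; [intros _ s0 H0; destruct H0|intros _].
        apply (Fu p0); [exact Fp0|]. apply (proj2 Hinf). intros s0 H0; destruct H0.
      * assert (m = a) as ->.
        { apply Ha; [apply (proj1 Hinf); simpl; auto|apply (proj2 Hinf); intros s [<-|[]]; auto]. }
        split; [intros H s [<-|[]]; auto|intros H; apply H; simpl; auto].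
      * apply inf2 in Hinf. destruct Hinf as [Hma [Hmb Hm]]. split.
        -- intros H s [<-|[<-|[]]]; eapply Fu; eauto.
        -- intros H. apply (Fm a b m); [apply H; simpl; auto|apply H; simpl; auto|repeat split; auto].
    + intros l m Hlen Hsup [F HF]; simpl; destruct HF as [Fu [Fm [Fp [[p0 Fp0] [q0 Fq0]]]]].
      destruct l as [|a [|b [|c l]]]; simpl in Hlen; try lia.
      * split; [intros H|intros [s0 [H0 _]]; destruct H0]. exfalso; apply Fq0. apply (Fu m); [exact H|].
        apply (proj2 Hsup). intros s0 H0; destruct H0.
      * assert (m = a) as ->.
        { apply Ha; [apply (proj2 Hsup); intros s [<-|[]]; auto|apply (proj1 Hsup); simpl; auto]. }
        split; [intros H; exists a; simpl; auto|intros [s [[<-|[]] H]]; auto].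
      * apply sup2 in Hsup. destruct Hsup as [Hma [Hmb Hm]]. split.
        -- intros H. destruct (Fp a b m H (conj Hma (conj Hmb Hm))) as [Q|Q];
           [exists a|exists b]; simpl; auto.
        -- intros [s [[<-|[<-|[]]] H]]; eapply Fu; eauto.
Qed.
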